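(* Let $n\ge 2$ and let $G$ be a tree on $n$ vertices. Then $\mathrm{irr}_t(G)\ge 2n-4$, with equality if and only if $G\cong P_n$.
   Context: For a graph $G=(V,E)$ and $w\in V$, $d_G(w)$ is the degree of $w$. The total irregularity is $\mathrm{irr}_t(G)=\frac12\sum_{x,y\in V}|d_G(x)-d_G(y)|$, where the sum runs over all ordered pairs of vertices. $P_n$ denotes the path on $n$ vertices. *)

(* Defs.v *)
From mathcomp Require Import all_boot all_order all_algebra.
Import IntDist.
Set Implicit Arguments. Unset Strict Implicit. Unset Printing Implicit Defensive.

Definition simple_graph (T : finType) (e : rel T) : Prop :=
  symmetric e /\ irreflexive e.

Definition deg (T : finType) (e : rel T) (w : T) : nat := #|[set y | e w y]|.

Definition connected (T : finType) (e : rel T) : Prop :=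
  forall x y : T, connect e x y.

Definition acyclic (T : finType) (e : rel T) : Prop :=
  forall p : seq T, 2 < size p -> uniq p -> ~~ cycle e p.

Definition is_tree (T : finType) (e : rel T) : Prop :=
  simple_graph e /\ connected e /\ acyclic e.

(* Total irregularity: (1/2) * sum over ordered pairs (x,y) of |d(x) - d(y)|.
   The double sum is even (it is symmetric with zero diagonal), so the
   natural-number halving is exact. *)
Definition irr_t (T : finType) (e : rel T) : nat :=
  (\sum_(x : T) \sum_(y : T) `|deg e x - deg e y|%N) %/ 2.

Definition path_rel (n : nat) : rel 'I_n :=
  fun i j => (i.+1 == j :> nat) || (j.+1 == i :> nat).

Definition graph_iso (T T' : finType) (e : rel T) (e' : rel T') : Prop :=
  exists f : T -> T', bijective f /\ forall x y, e' (f x) (f y) = e x y.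

(* Main.v *)
Require Import Defs.
From mathcomp Require Import all_boot all_order all_algebra zify.
Import IntDist.
Set Implicit Arguments. Unset Strict Implicit. Unset Printing Implicit Defensive.

Lemma distnat (m n : nat) : `|m - n|%N = (m - n) + (n - m).
Proof. case: (leqP m n) => h. rewrite distnEr //; lia. rewrite distnEl; lia. Qed.

Definition Fd (T : finType) (d : T -> nat) x y := (d x - d y) + (d y - d x).
Section Ident.
Variables (T : finType) (d : T -> nat) (a b : T).
Hypotheses (ab : a != b) (da : d a = 1) (db : d b = 1) (dpos : forall x, 0 < d x).
Local Notation F := (Fd d).
Let P x := (x != a) && (x != b).

Lemma split2 (G : T -> nat) : \sum_x G x = G a + G b + \sum_(x | P x) G x.
Proof.
rewrite (bigD1 a) //= (bigD1 b) /=; last by rewrite eq_sym.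
rewrite addnA; congr (_ + _ + _); apply: eq_bigl => x; rewrite /P andbC //.
Qed.

Lemma sumPd : \sum_(x | P x) (d x - 1) = \sum_x (d x - 1).
Proof. by rewrite (split2 (fun x => d x - 1)) da db. Qed.

Lemma ident : \sum_x \sum_y F x y =
  4 * \sum_x (d x - 1) + \sum_(x | P x) \sum_(y | P y) F x y.
Proof.
under eq_bigr => x _ do rewrite (split2 (F x)).
rewrite big_split big_split /=.
have Ha : \sum_x F x a = \sum_x (d x - 1).
  by apply: eq_bigr => x _; rewrite /F da; have := dpos x; lia.
have Hb : \sum_x F x b = \sum_x (d x - 1).
  by apply: eq_bigr => x _; rewrite /F db; have := dpos x; lia.
rewrite Ha Hb (split2 (fun x => \sum_(y | P y) F x y)).
have Ha' : \sum_(y | P y) F a y = \sum_x (d x - 1).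
  by rewrite -sumPd; apply: eq_bigr => y _; rewrite /F da; have := dpos y; lia.
have Hb' : \sum_(y | P y) F b y = \sum_x (d x - 1).
  by rewrite -sumPd; apply: eq_bigr => y _; rewrite /F db; have := dpos y; lia.
rewrite Ha' Hb'; lia.
Qed.
End Ident.

Lemma maxpath (T : finType) (e : rel T) (a : T) : exists q : seq T,
  [/\ path e a q, uniq (a :: q) & forall y, e (last a q) y -> y \in a :: q].
Proof.
pose P m := [exists t : m.-tuple T, path e a t && uniq (a :: t)].
have ex0 : exists i, P i by exists 0; apply/existsP; exists [tuple]; rewrite /=.
have ub : forall i, P i -> i <= #|T|.
  move=> i /existsP [t /andP [_ ut]].
  have := max_card (mem (a :: t)); rewrite (card_uniqP ut) /= size_tuple; lia.
case: (ex_maxnP ex0 ub) => m /existsP [t /andP [pt ut]] maxm.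
exists t; split => // y ey; apply/negPn/negP => ny.
have : P (size (rcons t y)).
  apply/existsP; exists (in_tuple (rcons t y)).
  rewrite /= rcons_path pt ey /= rcons_uniq mem_rcons in_cons.
  move: ut ny; rewrite /= !in_cons negb_or => /andP [a1 ->] /andP [ya ->].
  by rewrite eq_sym (negbTE ya) (negbTE a1).
move/maxm; rewrite size_rcons size_tuple; lia.
Qed.

Lemma set2P (T : finType) (A : {set T}) u v y :
  u \in A -> v \in A -> u != v -> #|A| <= 2 -> y \in A -> y = u \/ y = v.
Proof.
move=> uA vA uv cA yA.
have : [set u; v] == A.
  rewrite eqEcard cards2 uv cA andbT; apply/subsetP => z.
  by rewrite !inE => /orP [] /eqP ->.
move/eqP => HA; move: yA; rewrite -HA !inE => /orP [] /eqP; auto.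
Qed.

Lemma set1P (T : finType) (A : {set T}) u y :
  u \in A -> #|A| <= 1 -> y \in A -> y = u.
Proof.
move=> uA cA yA.
have : [set u] == A.
  rewrite eqEcard cards1 cA andbT; apply/subsetP => z.
  by rewrite !inE => /eqP ->.
by move/eqP => HA; move: yA; rewrite -HA !inE => /eqP.
Qed.

Section PathStruct.
Variables (T : finType) (e : rel T).
Hypotheses (esym : symmetric e) (eirr : irreflexive e).
Variables (p : seq T) (x0 : T).
Hypotheses (sp : sorted e p) (up : uniq p).
Local Notation x i := (nth x0 p i).
Local Notation k := (size p).-1.

Lemma adj i : i.+1 < size p -> e (x i) (x i.+1).
Proof.
case: p sp => [|h t] //= pt hi.
by move/pathP: pt => /(_ x0 i hi).
Qed.

Lemma last_leaf : acyclic e -> (forall y, e (x k) y -> y \in p) ->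
  1 < size p -> forall y, e (x k) y -> y = x k.-1.
Proof.
move=> acy clo s2 y ey.
have yp := clo y ey.
have jl : index y p < size p by rewrite index_mem.
have yx : y = x (index y p) by rewrite nth_index.
move: ey; rewrite yx => ey.
case: (ltngtP (index y p) k.-1) => hj; last by rewrite hj.
- exfalso. set j := index y p in jl yx ey hj.
  have jp : j < size p by [].
  have := acy (drop j p).
  rewrite size_drop drop_uniq // (drop_nth x0 jp) /=.
  have -> : 2 < size p - j by lia.
  have ps : path e (x j) (drop j.+1 p).
    by have := drop_sorted j sp; rewrite (drop_nth x0 jp).
  rewrite rcons_path ps /=.
  have -> : last (x j) (drop j.+1 p) = x k.
    rewrite (last_nth x0) -(drop_nth x0 jp) nth_drop size_drop.
    by have -> : j + (size p - j.+1) = k by lia.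
  by move/(_ isT isT); rewrite ey.
- have hjk : index y p = k by lia.
  by move: ey; rewrite hjk eirr.
Qed.

Lemma last_deg1 : acyclic e -> (forall y, e (x k) y -> y \in p) ->
  1 < size p -> deg e (x k) = 1.
Proof.
move=> acy clo s2; rewrite /deg.
have -> : [set y | e (x k) y] = [set x k.-1].
  apply/setP => y; rewrite !inE; apply/idP/eqP => [|->]; first exact: last_leaf.
  rewrite esym; have -> : k = k.-1.+1 by lia.
  by apply: adj; lia.
by rewrite cards1.
Qed.

Hypotheses (dle2 : forall y, deg e y <= 2) (d0 : deg e (x 0) = 1).

Lemma nbr_inner i y : i < k -> e (x i) y -> y = x i.+1 \/ (0 < i /\ y = x i.-1).
Proof.
move=> ik ey.
have a1 : x i.+1 \in [set z | e (x i) z].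
  rewrite inE; apply: adj. lia.
have yin : y \in [set z | e (x i) z] by rewrite inE.
case: i ik ey a1 yin => [|i] ik ey a1 yin.
  by left; apply: (set1P a1 _ yin); rewrite -d0.
have a2' : x i \in [set z | e (x i.+1) z] by rewrite inE esym; apply: adj; lia.
have s3 : i.+2 < size p by lia.
have s0 : i < size p by lia.
have ne : x i.+2 != x i by rewrite (nth_uniq x0 s3 s0 up); lia.
case: (set2P a1 a2' ne (dle2 _) yin); first by left. by move=> ->; right.
Qed.

Hypothesis clo : forall y, e (x k) y -> y \in p.

Lemma step_in u v : u \in p -> e u v -> v \in p.
Proof.
move=> uin euv.
have il : index u p < size p by rewrite index_mem.
have ux : x (index u p) = u by rewrite nth_index.
case: (ltnP (index u p) k) => h.
- rewrite -ux in euv; case: (nbr_inner h euv) => [->|[_ ->]]; apply: mem_nth.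
    have : (index u p).+1 < size p by lia. by [].
  have : (index u p).-1 < size p by lia. by [].
- have hk : index u p = k by lia.
  by apply: clo; rewrite -hk ux.
Qed.

Hypothesis conn : connected e.
Hypothesis pne : 0 < size p.

Lemma all_in y : y \in p.
Proof.
have : connect e (x 0) y by apply: conn.
case/connectP => s ps ->.
have : x 0 \in p by apply: mem_nth.
elim: s (x 0) ps => [|v s IH] u //= /andP [euv ps] uin.
exact: IH ps (step_in uin euv).
Qed.

Lemma sizeT : size p = #|T|.
Proof. rewrite -(card_uniqP up) cardT; apply: eq_cardT => y; by rewrite all_in. Qed.

Lemma iltn y : index y p < #|T|.
Proof. by rewrite -sizeT index_mem all_in. Qed.

Definition fiso y : 'I_#|T| := Ordinal (iltn y).

Lemma path_iso : graph_iso e (@path_rel #|T|).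
Proof.
exists fiso; split.
  apply: inj_card_bij; last by rewrite card_ord.
  move=> y z /(congr1 val) /= h.
  by rewrite -(nth_index x0 (all_in y)) h nth_index // all_in.
move=> y z; rewrite /path_rel /=.
have il : index y p < size p by rewrite index_mem all_in.
have jl : index z p < size p by rewrite index_mem all_in.
have hy : x (index y p) = y by rewrite nth_index // all_in.
have hz : x (index z p) = z by rewrite nth_index // all_in.
move: il jl hy hz; set i := index y p; set j := index z p => il jl hy hz.
apply/idP/idP.
  case/orP => /eqP h.
    by rewrite -hy -hz -h; apply: adj; lia.
  by rewrite esym -hy -hz -h; apply: adj; lia.
move=> eyz.
have ui : forall m, m < size p -> index (x m) p = m.
  by move=> m hm; apply: index_uniq.
case: (ltnP i k) => hi.
  rewrite -hy in eyz; case: (nbr_inner hi eyz) => [h | [h0 h]].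
    have : j = i.+1 by rewrite /j h ui //; lia.
    by move=> ->; rewrite eqxx.
  have : j = i.-1 by rewrite /j h ui //; lia.
  by move=> ->; apply/orP; right; apply/eqP; lia.
have ji : j != i.
  apply/eqP => hji; move: eyz; rewrite -hy -hz hji.
  by rewrite eirr.
have hj : j < k by move/eqP: ji => ji; lia.
rewrite esym -hz in eyz; case: (nbr_inner hj eyz) => [h | [h0 h]].
  have : i = j.+1 by rewrite /i h ui //; lia.
  by move=> ->; apply/orP; right.
have : i = j.-1 by rewrite /i h ui //; lia.
lia.
Qed.
End PathStruct.

Section BFS.
Variables (T : finType) (e : rel T).
Hypotheses (esym : symmetric e) (conn : connected e).
Variable r : T.

Definition hP v m := [exists t : m.-tuple T, path e v t && (last v t == r)].
Lemma hex v : exists m, hP v m.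
Proof.
have := conn v r; case/connectP => s ps hl.
exists (size s); apply/existsP; exists (in_tuple s); by rewrite /= ps -hl eqxx.
Qed.
Definition h v := ex_minn (hex v).

Lemma h_step v : v != r -> exists y, e v y && (h y < h v).
Proof.
move=> vr; rewrite /h; case: (ex_minnP (hex v)) => m /existsP [[s st] /= /andP [ps /eqP hl]] minm.
case: s st ps hl => [|y s] st /=; first by move=> _ hl; rewrite hl eqxx in vr.
move=> /andP [evy ps] hl; exists y; rewrite evy /=.
case: (ex_minnP (hex y)) => m' _ minm'.
have : hP y (size s) by apply/existsP; exists (in_tuple s); rewrite /= ps hl eqxx.
move/minm'; move/eqP: st => /= st; lia.
Qed.

Definition par v := odflt v [pick y | e v y && (h y < h v)].
Lemma par_spec v : v != r -> e v (par v) && (h (par v) < h v).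
Proof.
move=> vr; rewrite /par; case: pickP => [y hy|none] //=.
by have [y hy] := h_step vr; rewrite none in hy.
Qed.

Definition C v := [set w | (w != r) && (par w == v)].

Lemma deg_ge v : #|C v| + (v != r) <= deg e v.
Proof.
have CN : C v \subset [set y | e v y].
  apply/subsetP => w; rewrite !inE => /andP [wr /eqP pw].
  by have := par_spec wr; rewrite pw esym => /andP [].
case: (eqVneq v r) => [hv|vr].
  by rewrite /= addn0; exact: subset_leq_card CN.
have [ep hp] := andP (par_spec vr).
have pC : par v \notin C v.
  rewrite inE; apply/negP => /andP [pr /eqP pp].
  have := par_spec pr; rewrite pp => /andP [_]; lia.
have : par v |: C v \subset [set y | e v y].
  by rewrite subUset CN andbT sub1set inE.
move/subset_leq_card; rewrite cardsU1 pC /= addnC; by [].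
Qed.

Lemma sumC : \sum_v #|C v| = #|T|.-1.
Proof.
have e1 : forall v, #|C v| = \sum_w ((w != r) && (par w == v) : nat).
  move=> v; rewrite -sum1_card big_mkcond /=; apply: eq_bigr => w _.
  by rewrite inE; case: ifP.
under eq_bigr => v _ do rewrite e1.
rewrite exchange_big /=.
have e2 : forall w, \sum_v ((w != r) && (par w == v) : nat) = (w != r).
  move=> w; rewrite (bigD1 (par w)) //= eqxx andbT big1 ?addn0 // => v /negbTE.
  by rewrite eq_sym => ->; rewrite andbF.
under eq_bigr => w _ do rewrite e2.
rewrite -(cardC1 r) -sum1_card [RHS]big_mkcond /=; apply: eq_bigr => w _.
by rewrite !inE; case: (w != r).
Qed.

Lemma sum_deg : 2 * #|T|.-1 <= \sum_v deg e v.
Proof.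
apply: (@leq_trans (\sum_v (#|C v| + (v != r)))); last first.
  by apply: leq_sum => v _; apply: deg_ge.
rewrite big_split /= sumC.
have -> : \sum_v ((v != r) : nat) = #|T|.-1.
  rewrite -(cardC1 r) -sum1_card [RHS]big_mkcond /=; apply: eq_bigr => w _.
  by rewrite !inE; case: (w != r).
by rewrite mul2n -addnn.
Qed.
End BFS.

Lemma deg_pos (T : finType) (e : rel T) : 2 <= #|T| -> connected e ->
  forall v, 0 < deg e v.
Proof.
move=> n2 conn v.
have : 0 < #|predC1 v| by rewrite cardC1; lia.
case/card_gt0P => y; rewrite inE => yv.
have := conn v y; case/connectP => [[|z s]] /=; first by move=> _ hy; rewrite hy eqxx in yv.
move=> /andP [evz _] _; apply/card_gt0P; exists z; by rewrite inE.
Qed.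

Lemma leaf_from (T : finType) (e : rel T) s : 2 <= #|T| -> is_tree e ->
  exists q, [/\ path e s q, uniq (s :: q), q != [::] & deg e (last s q) = 1].
Proof.
move=> n2 [[esym eirr] [conn acy]].
have [q [ps us clo]] := maxpath e s.
have qn : q != [::].
  apply/eqP => q0; move: clo; rewrite q0 /= => clo.
  have := deg_pos n2 conn s; case/card_gt0P => y; rewrite inE => esy.
  by have := clo y esy; rewrite inE => /eqP hy; rewrite hy eirr in esy.
exists q; split => //.
have sp : sorted e (s :: q) by [].
have s2 : 1 < size (s :: q) by move: qn; case: (q) => //.
have clo' : forall y, e (nth s (s :: q) (size (s :: q)).-1) y -> y \in s :: q.
  by move=> y; rewrite /= -last_nth; apply: clo.
have := last_deg1 esym eirr sp us acy clo' s2.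
by rewrite /= -last_nth.
Qed.

Lemma two_leaves (T : finType) (e : rel T) : 2 <= #|T| -> is_tree e ->
  exists a b, [/\ a != b, deg e a = 1 & deg e b = 1].
Proof.
move=> n2 tr.
have : 0 < #|T| by lia.
case/card_gt0P => s _.
have [q [_ _ _ da]] := leaf_from s n2 tr.
have [q' [_ us qn db]] := leaf_from (last s q) n2 tr.
exists (last s q), (last (last s q) q'); split => //.
case: q' us qn {db} => [|y t] //= /andP [nin _] _.
apply/eqP => h; move: nin; rewrite h.
by rewrite mem_last.
Qed.

Lemma sum_ord_eq n m : \sum_(j < n) ((m == j :> nat) : nat) = (m < n).
Proof.
elim: n => [|n IH]; first by rewrite big_ord0.
rewrite big_ord_recr /= IH; case: eqP => [->|h]; first by rewrite ltnn ltnSn.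
by rewrite addn0 ltnS; case: (ltngtP m n) h.
Qed.

Lemma path_deg n (i : 'I_n) : deg (@path_rel n) i = (i.+1 < n) + (0 < i).
Proof.
rewrite /deg -sum1_card big_mkcond /=.
have -> : \sum_j (if j \in [set j | path_rel i j] then 1 else 0) =
          \sum_(j < n) (((i.+1 == j :> nat) : nat) + ((i.-1 == j :> nat) && (0 < i) : nat)).
  apply: eq_bigr => j _; rewrite inE /path_rel.
  case: (eqVneq (i.+1 : nat) j) => h1; case: (eqVneq (j.+1 : nat) i) => h2 /=; try lia.
rewrite big_split /= sum_ord_eq.
case: (ltnP 0 i) => h4 /=.
  under eq_bigr => j _ do rewrite andbT. rewrite sum_ord_eq. have : i.-1 < n by case: i h4 => /= i' ? ?; lia. by move=> ->.
by rewrite big1 // => j _; rewrite andbF.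
Qed.

Lemma deg_iso (T T' : finType) (e : rel T) (e' : rel T') (f : T -> T') :
  bijective f -> (forall x y, e' (f x) (f y) = e x y) ->
  forall x, deg e x = deg e' (f x).
Proof.
move=> bf he x; rewrite /deg.
have -> : [set j | e' (f x) j] = f @: [set y | e x y].
  case: bf => g fg gf.
  apply/setP => j; rewrite inE -{1 2}(gf j) he.
  by rewrite (mem_imset _ _ (can_inj fg)) inE.
by rewrite card_imset //; apply: bij_inj.
Qed.

Lemma irr_expr (T : finType) (e : rel T) :
  irr_t e = (\sum_x \sum_y Fd (deg e) x y) %/ 2.
Proof.
rewrite /irr_t; congr (_ %/ 2); apply: eq_bigr => x _; apply: eq_bigr => y _.
by rewrite distnat.
Qed.

Lemma countP (T : finType) (a b : T) : a != b ->
  \sum_(x | (x != a) && (x != b)) 1 = #|T| - 2.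
Proof.
move=> ab; have := split2 ab (fun _ => 1); rewrite sum1_card => ->; lia.
Qed.

Lemma pdeg1 n (i : 'I_n) : ((i.+1 < n) + (0 < i) = 1) -> (i = 0 :> nat) \/ (i = n.-1 :> nat).
Proof.
have := ltn_ord i.
case: (ltnP i.+1 n) => h1; case: (ltnP 0 i) => h2 /=; rewrite /nat_of_bool; lia.
Qed.

Lemma pdeg2 n (i : 'I_n) : (i != 0 :> nat) -> (i != n.-1 :> nat) -> (i.+1 < n) + (0 < i) = 2.
Proof.
move=> h0 h3; have := ltn_ord i.
case: (ltnP i.+1 n) => h1; case: (ltnP 0 i) => h2 /=; rewrite /nat_of_bool; lia.
Qed.

Theorem theorem5 (T : finType) (e : rel T) :
  2 <= #|T| -> is_tree e ->
  2 * #|T| - 4 <= irr_t e /\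
  (irr_t e = 2 * #|T| - 4 <-> graph_iso e (@path_rel #|T|)).
Proof.
move=> n2 tr; have tr' := tr; case: tr' => [[esym eirr] [conn acy]].
have dpos := deg_pos n2 conn.
have [a [b [ab da db]]] := two_leaves n2 tr.
have I := ident ab da db dpos.
set S := \sum_x (deg e x - 1) in I.
set W := \sum_(x | (x != a) && (x != b)) \sum_(y | (y != a) && (y != b)) Fd (deg e) x y in I.
have SD : S + #|T| = \sum_x deg e x.
  rewrite /S -sum1_card -big_split /=; apply: eq_bigr => x _.
  have := dpos x; lia.
have sd := sum_deg esym conn a.
have Sge : #|T| - 2 <= S by lia.
have irrE : irr_t e = (4 * S + W) %/ 2 by rewrite irr_expr I.
split; first by rewrite irrE; lia.
split.
- move=> heq.
  have [S2 W1] : S = #|T| - 2 /\ W <= 1 by lia.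
  have deq : forall x y, (x != a) && (x != b) -> (y != a) && (y != b) ->
      deg e x = deg e y.
    move=> x y Px Py; apply/eqP/negPn/negP => nxy.
    have xy : x != y by apply: contra nxy => /eqP ->.
    have : Fd (deg e) x y + Fd (deg e) y x <= W.
      rewrite /W (bigD1 x) //=; apply: leq_add.
        by rewrite (bigD1 y) //=; apply: leq_addr.
      rewrite (bigD1 y) /=; last by rewrite Py eq_sym xy.
      apply: leq_trans (leq_addr _ _).
      by rewrite (bigD1 x) //=; apply: leq_addr.
    rewrite /Fd; move/eqP: nxy; lia.
  have dle2 : forall x, deg e x <= 2.
    move=> x; case: (eqVneq x a) => [->|xa]; first by rewrite da.
    case: (eqVneq x b) => [->|xb]; first by rewrite db.
    have Px : (x != a) && (x != b) by rewrite xa xb.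
    have hs : \sum_(y | (y != a) && (y != b)) (deg e y - 1) =
              (\sum_(y | (y != a) && (y != b)) 1) * (deg e x - 1).
      rewrite big_distrl /=; apply: eq_bigr => y Py.
      by rewrite mul1n (deq y x Py Px).
    have c1 : 1 <= \sum_(y | (y != a) && (y != b)) 1.
      by rewrite (bigD1 x) //=; lia.
    move: hs; rewrite (sumPd ab da db) -/S (countP ab) S2 => hs.
    move: c1; rewrite (countP ab) => c1.
    have := dpos x; nia.
  have [q [ps us clo]] := maxpath e a.
  apply: (@path_iso T e esym eirr (a :: q) a) => //.
  by move=> y; rewrite /= -last_nth; apply: clo.
- case=> f [bf hf].
  have dd : forall x, deg e x = ((f x).+1 < #|T|) + (0 < f x).
    by move=> x; rewrite (deg_iso bf hf) path_deg.
  have fl := ltn_ord (f _).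
  have d1 : forall x, deg e x = 1 -> (f x = 0 :> nat) \/ (f x = #|T|.-1 :> nat).
    by move=> x; rewrite dd; apply: pdeg1.
  have d2 : forall x, (f x != 0 :> nat) -> (f x != #|T|.-1 :> nat) -> deg e x = 2.
    by move=> x h0 h1; rewrite dd; apply: pdeg2.
  have finj := bij_inj bf.
  have Pd : forall x, (x != a) && (x != b) -> deg e x = 2.
    move=> x /andP [xa xb]; apply: d2.
      have fa := d1 a da; have fb := d1 b db.
      have fab : (f a != f b :> nat) by apply: contra ab => /eqP/val_inj/finj ->.
      have fxa : (f x != f a :> nat) by apply: contra xa => /eqP/val_inj/finj ->.
      have fxb : (f x != f b :> nat) by apply: contra xb => /eqP/val_inj/finj ->.
      move: fab fxa fxb; case: fa => ->; case: fb => ->; lia.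
    have fa := d1 a da; have fb := d1 b db.
    have fab : (f a != f b :> nat) by apply: contra ab => /eqP/val_inj/finj ->.
    have fxa : (f x != f a :> nat) by apply: contra xa => /eqP/val_inj/finj ->.
    have fxb : (f x != f b :> nat) by apply: contra xb => /eqP/val_inj/finj ->.
    move: fab fxa fxb; case: fa => ->; case: fb => ->; lia.
  have W0 : W = 0.
    rewrite /W big1 // => x Px; rewrite big1 // => y Py.
    by rewrite /Fd (Pd x Px) (Pd y Py).
  have S2 : S = #|T| - 2.
    rewrite /S -(sumPd ab da db) -(countP ab); apply: eq_bigr => x Px.
    by rewrite (Pd x Px).
  rewrite irrE W0 S2; lia.
Qed.
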